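(* Let $\mathcal P$ be a pre-Hahn-localizable family of probability measures on $(\Omega,\mathcal F)$ with a localization $\mathcal Q$ whose supports $\{S_Q\}$ are pairwise disjoint, and let $\mathcal H_{\mathcal F}^{\mathcal Q}$ be its Hahn-extension. Then $\mathcal P^{\mathcal Q}$ is Hahn-localizable on $(\Omega,\mathcal H_{\mathcal F}^{\mathcal Q})$, and $\mathcal Q^{\mathcal Q}=\{Q^{\mathcal Q}:Q\in\mathcal Q\}$ is a Hahn-localization of $\mathcal P^{\mathcal Q}$ with support sets $S_{Q^{\mathcal Q}}=S_Q$.
   Context: $\mathcal A\lll\mathcal B$ means every $A\in\mathcal A$ is absolutely continuous w.r.t. some $B\in\mathcal B$; $\mathrm{sconv}$ denotes countable convex combinations. On a measurable space $(\Omega,\mathcal G)$, a family $\mathcal P$ is pre-Hahn-localizable with localization $\mathcal Q$ (probability measures on $\mathcal G$) and supports $S_Q\in\mathcal G$ if $Q(S_R)=\delta_{QR}$ for $Q,R\in\mathcal Q$ and $\mathcal Q\lll\mathcal P\lll\mathrm{sconv}(\mathcal Q)$; this localization is a Hahn-localization (and $\mathcal P$ Hahn-localizable) if for every family $E_Q\in\mathcal G$, $E_Q\subseteq S_Q$, there is $S\in\mathcal G$ with $Q(E_Q\setminus S)=0$ for all $Q$, and any $F\in\mathcal G$ with $Q(E_Q\setminus F)=0$ for all $Q$ satisfies $Q(S\setminus F)=0$ for all $Q$. Hahn-extension: $\mathcal H_{\mathcal F}^{\mathcal Q}=\sigma\big(\mathcal F\cup\{\bigcup_{Q}E_Q:E_Q\in\mathcal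 F,E_Q\subseteq S_Q\}\big)$. For a probability measure $P$ on $\mathcal F$ absolutely continuous w.r.t. some element of $\mathcal P$ (including elements of $\mathcal P$ and $\mathcal Q$), $P^{\mathcal Q}(A)=\sum_{Q\in\mathcal Q(P)}P(A\cap S_Q)$ with $\mathcal Q(P)=\{Q:P(S_Q)>0\}$ (countable), a measure on $\mathcal H_{\mathcal F}^{\mathcal Q}$ extending $P$; $\mathcal P^{\mathcal Q}=\{P^{\mathcal Q}:P\in\mathcal P\}$. *)

(* Defs.v *)
From HB Require Import structures.
From mathcomp Require Import all_boot all_order all_algebra.
From mathcomp Require Import all_classical all_reals all_analysis.
Set Implicit Arguments. Unset Strict Implicit. Unset Printing Implicit Defensive.
Import Order.TTheory GRing.Theory Num.Theory.
Local Open Scope classical_set_scope.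
Local Open Scope ring_scope.
Local Open Scope ereal_scope.

Section Defs.
Context {R : realType} {T : Type}.

(* A "measure on G" is represented by a set function on all subsets of T;
   only its values on G matter. *)
Definition prob_on (G : set (set T)) (mu : set T -> \bar R) : Prop :=
  [/\ mu set0 = 0,
      (forall A, G A -> 0 <= mu A),
      (forall E : nat -> set T, (forall n, G (E n)) -> trivIset setT E ->
         mu (\bigcup_n E n) = \sum_(0 <= n <oo) mu (E n)) &
      mu setT = 1].

Definition abs_cont (G : set (set T)) (mu nu : set T -> \bar R) : Prop :=
  forall A, G A -> nu A = 0 -> mu A = 0.

Definition lll (G : set (set T)) (A B : set (set T -> \bar R)) : Prop :=
  forall mu, A mu -> exists2 nu, B nu & abs_cont G mu nu.

Definition sconv (A : set (set T -> \bar R)) : set (set T -> \bar R) :=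
  [set mu | exists (c : nat -> R) (q : nat -> set T -> \bar R),
     [/\ (forall n, A (q n)), (forall n, (0 <= c n)%R),
         \sum_(0 <= n <oo) (c n)%:E = 1 &
         mu = fun X => \sum_(0 <= n <oo) ((c n)%:E * q n X)]].

Definition pre_hahn_localization {I : choiceType} (G : set (set T))
    (Pf : set (set T -> \bar R)) (Q : I -> set T -> \bar R) (S : I -> set T) : Prop :=
  sigma_algebra setT G /\
  (forall P, Pf P -> prob_on G P) /\
  (forall i, prob_on G (Q i)) /\
  (forall i, G (S i)) /\
  (forall i j, (i = j -> Q i (S j) = 1) /\ (i <> j -> Q i (S j) = 0)) /\
  lll G (range Q) Pf /\
  lll G Pf (sconv (range Q)).

Definition hahn_localization {I : choiceType} (G : set (set T))
    (Pf : set (set T -> \bar R)) (Q : I -> set T -> \bar R) (S : I -> set T) : Prop :=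
  pre_hahn_localization G Pf Q S /\
  forall E : I -> set T, (forall i, G (E i) /\ E i `<=` S i) ->
    exists S0, [/\ G S0,
      (forall i, Q i (E i `\` S0) = 0) &
      (forall F, G F -> (forall i, Q i (E i `\` F) = 0) ->
         forall i, Q i (S0 `\` F) = 0)].

Definition hahn_localizable (G : set (set T)) (Pf : set (set T -> \bar R)) : Prop :=
  exists (I : choiceType) (Q : I -> set T -> \bar R) (S : I -> set T),
    hahn_localization G Pf Q S.

Definition hahn_ext {I : choiceType} (F : set (set T)) (S : I -> set T) : set (set T) :=
  <<s setT, F `|` [set A | exists E : I -> set T,
      (forall i, F (E i) /\ E i `<=` S i) /\ A = \bigcup_i E i] >>.

Definition hahn_ext_meas {I : choiceType} (S : I -> set T) (P : set T -> \bar R) : set T -> \bar R :=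
  fun A => esum [set i | (0 < P (S i))%E] (fun i => P (A `&` S i)).

End Defs.

(* Main.v *)
Require Import Defs.
From HB Require Import structures.
From mathcomp Require Import all_boot all_order all_algebra.
From mathcomp Require Import all_classical all_reals all_analysis.
From mathcomp Require Import lra.
From Stdlib Require Classical.
Import Order.TTheory GRing.Theory Num.Theory.
Local Open Scope classical_set_scope.
Local Open Scope ereal_scope.

Section Aux.
Context {R : realType} {T : Type}.
Variable F : set (set T).
Hypothesis sF : sigma_algebra setT F.

Lemma F0 : F set0. Proof. by case: sF. Qed.
Lemma FC A : F A -> F (~` A).
Proof. by case: sF => _ h _ /h; rewrite setTD. Qed.
Lemma FU (A : nat -> set T) : (forall n, F (A n)) -> F (\bigcup_n A n).
Proof. by case: sF => _ _; apply. Qed.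
Lemma FU2 A B : F A -> F B -> F (A `|` B).
Proof. move=> hA hB; rewrite -bigcup2E; apply: FU => -[|[|n]] //=; exact: F0. Qed.
Lemma FI2 A B : F A -> F B -> F (A `&` B).
Proof. by move=> hA hB; rewrite -[A `&` B]setCK setCI; apply/FC/FU2; apply: FC. Qed.
Lemma FD A B : F A -> F B -> F (A `\` B).
Proof. by move=> hA hB; rewrite setDE; apply: FI2 => //; apply: FC. Qed.

Variable mu : set T -> \bar R.
Hypothesis pmu : prob_on F mu.

Lemma mu0 : mu set0 = 0. Proof. by case: pmu. Qed.
Lemma mu_ge0 A : F A -> 0 <= mu A. Proof. by case: pmu => _ h _ _; apply: h. Qed.
Lemma mu_sigma (E : nat -> set T) : (forall n, F (E n)) -> trivIset setT E ->
  mu (\bigcup_n E n) = \sum_(0 <= n <oo) mu (E n).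
Proof. by case: pmu => _ _ h _; apply: h. Qed.
Lemma muT : mu setT = 1. Proof. by case: pmu. Qed.

Lemma mu_add2 A B : F A -> F B -> A `&` B = set0 -> mu (A `|` B) = mu A + mu B.
Proof.
move=> hA hB AB; rewrite -bigcup2E mu_sigma; last by rewrite -trivIset_bigcup2.
  rewrite (@nneseries_split _ _ 0 2); last first.
    by move=> [|[|n]] _ /=; [exact: mu_ge0|exact: mu_ge0|rewrite mu0].
  rewrite eseries0; last by move=> [|[|n]] //= _ _; rewrite mu0.
  by rewrite adde0 big_nat_recr //= big_nat_recr //= big_geq // add0e.
by move=> [|[|n]] //=; exact: F0.
Qed.

Lemma mu_mono A B : F A -> F B -> A `<=` B -> mu A <= mu B.
Proof.
move=> hA hB AB; rewrite -(setDUK AB) mu_add2 //; last 2 first.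
- exact: FD.
- by apply/seteqP; split => x // [ax [_ nax]].
by apply: leeDl; apply: mu_ge0; apply: FD.
Qed.

Lemma mu_null B X : F B -> F X -> mu (~` B) = 0 -> mu X = mu (X `&` B).
Proof.
move=> hB hX h0.
rewrite -{1}(setIT X) -(setUCr B) setIUr mu_add2; last 3 first.
- by apply: FI2.
- by apply: FI2 => //; apply: FC.
- by rewrite setIACA setICr setI0.
have -> : mu (X `&` ~` B) = 0.
  apply/le_anti; rewrite mu_ge0 ?andbT; last by apply: FI2 => //; apply: FC.
  by rewrite -h0; apply: mu_mono; [apply: FI2 => //; exact: FC|exact: FC|apply: subIsetr].
by rewrite adde0.
Qed.

Lemma muC1 B : F B -> mu B = 1 -> mu (~` B) = 0.
Proof.
move=> hB h1.
have h : 1 = 1 + mu (~` B).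
  by rewrite -h1 -mu_add2 ?setUCr ?muT //; [exact: FC | exact: setICr].
move: h; case: (mu (~` B)) => [r| |] //=.
move=> [] hr; congr EFin; lra.
Qed.

End Aux.

Arguments mu0 {R T F mu} _.
Arguments mu_ge0 {R T F mu} _ {A} _.
Arguments mu_sigma {R T F mu} _ {E} _ _.
Arguments muT {R T F mu} _.
Arguments mu_add2 {R T F} _ {mu} _ {A B} _ _ _.
Arguments mu_mono {R T F} _ {mu} _ {A B} _ _ _.
Arguments mu_null {R T F} _ {mu} _ {B X} _ _ _.
Arguments muC1 {R T F} _ {mu} _ {B} _ _.
Arguments F0 {T F} _.
Arguments FC {T F} _ {A} _.
Arguments FU {T F} _ {A} _.
Arguments FU2 {T F} _ {A B} _ _.
Arguments FI2 {T F} _ {A B} _ _.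
Arguments FD {T F} _ {A B} _ _.

Lemma prob_restr {R : realType} {T : Type} (F H : set (set T)) (nu : set T -> \bar R)
  (V : set T) (f : set T -> \bar R) :
  prob_on F nu -> sigma_algebra setT H -> (forall A, H A -> F (A `&` V)) -> nu V = 1 ->
  (forall A, H A -> f A = nu (A `&` V)) -> prob_on H f.
Proof.
move=> pn sH HV nV hf; have [H0 HC HU] := sH.
split.
- by rewrite hf // set0I (mu0 pn).
- by move=> A HA; rewrite hf //; apply: (mu_ge0 pn (HV _ HA)).
- move=> E HE tE; rewrite hf; last exact: HU.
  rewrite setI_bigcupl (mu_sigma pn); first by apply: eq_eseriesr => n _; rewrite hf.
    by move=> n; exact: HV.
  by move=> i j _ _ [x [[Ei _] [Ej _]]]; apply: tE => //; exists x.
- have HT : H setT by rewrite -setC0 -setTD; apply: HC.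
  by rewrite hf // setTI.
Qed.

Section Main.
Context {R : realType} {T : Type} {I : choiceType}.
Variables (F : set (set T)) (S : I -> set T).
Hypothesis sF : sigma_algebra setT F.
Hypothesis FS : forall i, F (S i).
Hypothesis disj : forall i j, i <> j -> S i `&` S j = set0.

Lemma ext_formula (P : set T -> \bar R) (k : nat -> I) A :
  prob_on F P -> (forall i, (forall n, k n <> i) -> P (S i) = 0) ->
  P (~` \bigcup_n S (k n)) = 0 -> (forall j, F (A `&` S j)) ->
  hahn_ext_meas S P A = P (A `&` \bigcup_n S (k n)).
Proof.
move=> pP h0 hU FA.
pose g i := P (A `&` S i).
have g0 i : 0 <= g i := mu_ge0 pP (FA i).
have step1 : hahn_ext_meas S P A = esum (range k) g.
  rewrite /hahn_ext_meas esum_mkcond [RHS]esum_mkcond; apply: eq_esum => i _.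
  rewrite /g; case: ifPn => [/set_mem /= Ji|nJ]; case: ifPn => [/set_mem [n _ kn]|nk] //.
  - exfalso; move: Ji; rewrite h0 ?ltxx // => n kn; apply: (negP nk); apply/mem_set.
    by exists n.
  - have : ~ (0 < P (S i)) by move=> h; apply: (negP nJ); apply/mem_set.
    move/negP; rewrite -leNgt => hle.
    apply/esym/le_anti; rewrite (mu_ge0 pP (FA i)) andbT; apply: le_trans hle.
    by apply: (mu_mono sF pP) => //; apply: subIsetr.
pose K := [set n | forall m, (m < n)%N -> k m <> k n].
have Kall n : exists2 m, K m & k m = k n.
  elim/ltn_ind: n => n IH.
  case: (pselect (K n)) => [Kn|nKn]; first by exists n.
  have [m] := Classical_Pred_Type.not_all_ex_not _ _ nKn.
  move=> hm; have [mn kmn] := Classical_Prop.imply_to_and _ _ hm.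
  have [m' Km' km'] := IH m mn.
  by exists m' => //; rewrite km'; exact: Classical_Prop.NNPP kmn.
have bij : set_bij K (range k) k.
  split.
  - by move=> n _; exists n.
  - move=> n m /set_mem Kn /set_mem Km knm.
    case: (ltngtP n m) => // nm; exfalso.
      exact: (Km n nm knm).
    exact: (Kn m nm (esym knm)).
  - by move=> i [n _ <-]; have [m Km kmn] := Kall n; exists m.
rewrite step1 (@reindex_esum R _ _ K (range k) k g bij).
have -> : esum K (fun i => g (k i)) = \sum_(n <oo | n \in K) g (k n).
  rewrite nneseries_esum //; congr esum; apply/seteqP; split => x; rewrite /= in_setE //.
rewrite eseries_mkcond.
pose D n := if n \in K then A `&` S (k n) else set0.
transitivity (\sum_(0 <= n <oo) P (D n)).
  by apply: eq_eseriesr => n _; rewrite /D; case: ifP => _ //; rewrite (mu0 pP).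
have FDn n : F (D n) by rewrite /D; case: ifP => _; [exact: FA|exact: F0].
rewrite -(mu_sigma pP FDn); last first.
  move=> n m _ _ [x [Dn Dm]]; move: Dn Dm; rewrite /D.
  case: ifP => Kn; last by [].
  case: ifP => Km; last by [].
  move=> [_ xn] [_ xm].
  case: (pselect (k n = k m)) => [e|ne]; last first.
    by have : (S (k n) `&` S (k m)) x by []; rewrite disj.
  move: Kn Km => /set_mem Kn /set_mem Km.
  case: (ltngtP n m) => // nm; exfalso.
    exact: (Km n nm e).
  exact: (Kn m nm (esym e)).
congr P; apply/seteqP; split => x.
  move=> [n _]; rewrite /D; case: ifP => // _ [ax xs]; split => //; by exists n.
move=> [ax [n _ xs]]; have [m Km kmn] := Kall n; exists m => //.
by rewrite /D ifT ?inE ?mem_set //; split => //; rewrite kmn.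
Qed.

End Main.

Theorem lemma4p5 (R : realType) (T : Type) (I : choiceType) (F : set (set T))
    (Pf : set (set T -> \bar R)) (Q : I -> set T -> \bar R) (S : I -> set T) :
  pre_hahn_localization F Pf Q S ->
  (forall i j, i <> j -> S i `&` S j = set0) ->
  hahn_localizable (hahn_ext F S) (hahn_ext_meas S @` Pf) /\
  hahn_localization (hahn_ext F S) (hahn_ext_meas S @` Pf)
    (fun i => hahn_ext_meas S (Q i)) S.
Proof.
case=> [sF [pPf [pQ [FS [dQ [llQ llP]]]]]] disj.
pose H := hahn_ext F S.
have HF : forall A, H A -> forall i, F (A `&` S i).
  apply: smallest_sub.
    split.
    - by move=> i; rewrite set0I; exact: F0.
    - move=> A hA i; rewrite setTD.
      have -> : ~` A `&` S i = S i `\` (A `&` S i).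
        apply/seteqP; split => x /= [h1 h2]; split => //.
          by move=> [ax _]; exact: h1 ax.
        by move=> ax; apply: h2.
      exact: FD.
    - by move=> A hA i; rewrite setI_bigcupl; apply: (FU sF) => n; exact: hA.
  move=> A [FA|[E [hE ->]]] i; first exact: FI2.
  have -> : (\bigcup_j E j) `&` S i = E i.
    apply/seteqP; split => x.
      move=> [[j _ Ejx] Sx]; case: (pselect (j = i)) => [<-//|ne].
      have : (S j `&` S i) x by split => //; apply: (proj2 (hE j)).
      by rewrite disj.
    by move=> Eix; split; [exists i|apply: (proj2 (hE i))].
  exact: (proj1 (hE i)).
have FH : forall A, F A -> H A.
  by move=> A FA; apply: sub_gen_smallest; left.
have sH : sigma_algebra setT H := smallest_sigma_algebra _ _.
have HU : forall (k : nat -> I) A, H A -> F (A `&` \bigcup_n S (k n)).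
  by move=> k A HA; rewrite setI_bigcupr; apply: (FU sF) => n; exact: HF.
have QS : forall i, Q i (S i) = 1 by move=> i; exact: (proj1 (dQ i i)).
have QC : forall i, Q i (~` S i) = 0 by move=> i; apply: (muC1 sF (pQ i)).
have QQ : forall i A, H A -> hahn_ext_meas S (Q i) A = Q i (A `&` S i).
  move=> i A HA; rewrite /hahn_ext_meas.
  have -> : [set j | 0 < Q i (S j)] = [set i].
    apply/seteqP; split => j /=.
      move=> h; apply: Classical_Prop.NNPP => ne.
      by move: h; rewrite (proj2 (dQ i j)) ?ltxx //; move=> e; apply: ne.
    by move=> ->; rewrite QS lte01.
  by rewrite esum_set1 //; apply: (mu_ge0 (pQ i)); apply: HF.
have Pdata : forall P, Pf P -> exists k : nat -> I, exists c : nat -> R,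
    [/\ (forall n, (0 <= c n)%R), \sum_(0 <= n <oo) (c n)%:E = 1,
        abs_cont F P (fun X => \sum_(0 <= n <oo) ((c n)%:E * Q (k n) X)),
        (forall i, (forall n, k n <> i) -> P (S i) = 0) &
        P (~` \bigcup_n S (k n)) = 0].
  move=> P PfP; have [nu [c [q [hq hc hs ->]]] hac] := llP P PfP.
  have [k hk] : {k : nat -> I & forall n, Q (k n) = q n}.
    apply: (@choice _ _ (fun n i => Q i = q n)) => n.
    by case: (hq n) => i _ <-; exists i.
  have eq : q = fun n => Q (k n) by apply/funext => n; rewrite hk.
  subst q; exists k, c; split => //.
  - move=> i hi; apply: hac => //.
    apply: eseries0 => n _ _; rewrite (proj2 (dQ (k n) i)) ?mule0 //.
  - have FU' : F (\bigcup_n S (k n)) by apply: (FU sF) => n.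
    apply: hac; first exact: (FC sF).
    apply: eseries0 => n _ _.
    have -> : Q (k n) (~` \bigcup_n S (k n)) = 0.
      apply/le_anti; rewrite (mu_ge0 (pQ (k n))) ?andbT; last exact: (FC sF).
      rewrite -(QC (k n)); apply: (mu_mono sF (pQ (k n))).
      + exact: (FC sF).
      + exact: (FC sF).
      + by apply: subsetC; exact: bigcup_sup.
    by rewrite mule0.
have PQ : forall P (k : nat -> I) A, Pf P ->
    (forall i, (forall n, k n <> i) -> P (S i) = 0) ->
    P (~` \bigcup_n S (k n)) = 0 -> H A ->
    hahn_ext_meas S P A = P (A `&` \bigcup_n S (k n)).
  move=> P k A PfP h0 hU HA.
  exact: (@ext_formula R T I F S sF FS disj P k A (pPf P PfP) h0 hU (HF A HA)).
have pre : pre_hahn_localization H (hahn_ext_meas S @` Pf)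
    (fun i => hahn_ext_meas S (Q i)) S.
  split => //; split.
    move=> _ [P PfP <-]; have [k [c [_ _ _ h0 hU]]] := Pdata P PfP.
    apply: (@prob_restr _ _ F H P (\bigcup_n S (k n)) _ (pPf P PfP) sH (HU k)).
      have pP := pPf P PfP.
      have FUk : F (\bigcup_n S (k n)) by apply: (FU sF).
      have FT : F setT by rewrite -setC0; apply: (FC sF); exact: (F0 sF).
      by rewrite -[X in P X]setTI -(mu_null sF pP FUk FT hU) (muT pP).
    by move=> A HA; apply: PQ.
  split.
    move=> i; apply: (@prob_restr _ _ F H (Q i) (S i) _ (pQ i) sH (fun A HA => HF A HA i) (QS i)).
    by move=> A HA; apply: QQ.
  split; first by move=> i; apply: FH.
  split.
    move=> i j; rewrite QQ; last exact: FH.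
    split; first by move=> <-; rewrite setIid.
    by move=> ne; rewrite (disj _ _ (nesym ne)) (mu0 (pQ i)).
  split.
    move=> _ [i _ <-]; have [P PfP hac] := llQ (Q i) (ex_intro2 _ _ i Logic.I erefl).
    have [k [c [_ _ _ h0 hU]]] := Pdata P PfP.
    exists (hahn_ext_meas S P); first by exists P.
    move=> A HA; rewrite QQ // (PQ P k A PfP h0 hU HA) => hP0; apply: hac; first exact: HF.
    have pP := pPf P PfP.
    have FUk : F (\bigcup_n S (k n)) by apply: (FU sF).
    rewrite (mu_null sF pP (B := \bigcup_n S (k n))) //; last exact: HF.
    apply/le_anti; rewrite (mu_ge0 pP) ?andbT; last by apply: (FI2 sF) => //; exact: HF.
    rewrite -hP0; apply: (mu_mono sF pP).
    + by apply: (FI2 sF) => //; exact: HF.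
    + exact: HU.
    + by move=> x [[ax _] ux].
  move=> _ [P PfP <-]; have [k [c [c0 c1 hac h0 hU]]] := Pdata P PfP.
  exists (fun X => \sum_(0 <= n <oo) ((c n)%:E * hahn_ext_meas S (Q (k n)) X)).
    exists c, (fun n => hahn_ext_meas S (Q (k n))); split => //.
  move=> A HA hnu; rewrite (PQ P k A PfP h0 hU HA); apply: hac; first exact: HU.
  rewrite -[X in _ = X]hnu; apply: eq_eseriesr => n _; rewrite QQ //; congr (_ * _).
  rewrite (mu_null sF (pQ (k n)) (B := S (k n))) //; last exact: HU.
  by rewrite -setIA (setIidr (bigcup_sup _)).
have hl : hahn_localization H (hahn_ext_meas S @` Pf)
    (fun i => hahn_ext_meas S (Q i)) S.
  split => // E hE.
  have FE i : F (E i).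
    by rewrite -(setIidl (proj2 (hE i))); apply: HF; exact: (proj1 (hE i)).
  have HS0 : H (\bigcup_i E i).
    apply: sub_gen_smallest; right; exists E; split => // i; split => //.
    exact: (proj2 (hE i)).
  exists (\bigcup_i E i); split => //.
  - move=> i; rewrite QQ; last by apply: (FD sH) => //; exact: (proj1 (hE i)).
    have -> : (E i `\` \bigcup_j E j) `&` S i = set0.
      by apply/seteqP; split => x // [[Ex nx] _]; apply: nx; exists i.
    exact: (mu0 (pQ i)).
  - move=> F' HF' hF' i; rewrite QQ; last by apply: (FD sH).
    have := hF' i; rewrite QQ; last by apply: (FD sH) => //; exact: (proj1 (hE i)).
    suff -> : (\bigcup_j E j `\` F') `&` S i = (E i `\` F') `&` S i by [].
    apply/seteqP; split => x.
      move=> [[[j _ Ejx] nF] Sx]; split => //; split => //.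
      case: (pselect (j = i)) => [<-//|ne].
      have : (S j `&` S i) x by split => //; apply: (proj2 (hE j)).
      by rewrite disj.
    by move=> [[Ex nF] Sx]; split => //; split => //; exists i.
split => //; by exists I, (fun i => hahn_ext_meas S (Q i)), S.
Qed.
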